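(* Let $(\Omega,\mathcal F,Q,(\mathcal F_t)_{t=0}^T)$ be a filtered probability space, $\pi>0$, and $t\in\{0,\dots,T-1\}$. Suppose $c_t:\mathbb R\times\Omega\to\mathbb R$ is $\mathcal B(\mathbb R)\otimes\mathcal F_t$-measurable with $a\mapsto c_t(a)(\omega)$ non-decreasing and continuous, and $\alpha_{t+1}:\mathbb R\times\Omega\to[0,\pi]$ is $\mathcal B(\mathbb R)\otimes\mathcal F$-measurable with $g\mapsto\alpha_{t+1}(g)(\omega)$ non-decreasing for all $\omega\in\Omega$. Let $Q_t$ be a regular version of the $\mathcal F_t$-conditional distribution of $Q$, and let $\varepsilon_{t+1}$ be a random variable such that for each $\omega\in\Omega$ the map $\mathbb R\to[0,\pi]$, $x\mapsto\int_\Omega\alpha_{t+1}(x+\varepsilon_{t+1}(\omega'))(\omega')\,Q_t(d\omega')(\omega)$ is continuous. Then: (i) there exists a unique $\mathcal B(\mathbb R)\otimes\mathcal F_t$-measurable $[0,\pi]$-valued $\alpha_t$ satisfying $$\alpha_t(g)(\omega)=\mathbb E^Q_t\big(\alpha_{t+1}(g-c_t(\alpha_t(g))+\varepsilon_{t+1})\big)(\omega)\quad\text{for all }g\in\mathbb R\text{ and almost all }\omega\in\Omega;$$ (ii) the map $\mathbb R\to[0,\pi]$, $g\mapsto\alpha_t(g)(\omega)$, is non-decreasing and continuous for all $\omega\in\Omega$.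
   Context: $\mathbb E^Q_t$ denotes conditional expectation under $Q$ given $\mathcal F_t$. *)

(* Defs.v *)
From HB Require Import structures.
From mathcomp Require Import all_boot all_order all_algebra.
From mathcomp Require Import all_classical all_reals all_analysis.
Set Implicit Arguments. Unset Strict Implicit. Unset Printing Implicit Defensive.
Import Order.TTheory GRing.Theory Num.Theory numFieldNormedType.Exports.
Local Open Scope classical_set_scope.
Local Open Scope ring_scope.

Section defs.
Context {d : measure_display} {Omega : measurableType d} {R : realType}.

Definition sub_sigma_algebra (G : set (set Omega)) : Prop :=
  sigma_algebra setT G /\ G `<=` measurable.

Definition is_filtration (F : nat -> set (set Omega)) (Tn : nat) : Prop :=
  (forall t, (t <= Tn)%N -> sub_sigma_algebra (F t)) /\
  (forall s t, (s <= t)%N -> (t <= Tn)%N -> F s `<=` F t).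

Definition G_measurable {d' : measure_display} {Y : measurableType d'}
  (G : set (set Omega)) (f : Omega -> Y) : Prop :=
  forall B : set Y, measurable B -> G (f @^-1` B).

Definition rectangles (G : set (set Omega)) : set (set (R * Omega)) :=
  fun S => exists A B, measurable A /\ G B /\ S = A `*` B.

Definition jointly_measurable (G : set (set Omega)) (f : R -> Omega -> R) : Prop :=
  forall B : set R, measurable B ->
    <<s rectangles G >> ((fun p : R * Omega => f p.1 p.2) @^-1` B).

Definition regular_cond_distr (Q : probability Omega R) (G : set (set Omega))
    (Qt : Omega -> probability Omega R) : Prop :=
  (forall A, measurable A -> G_measurable G (fun w => fine (Qt w A) : R)) /\
  (forall A B, measurable A -> G B ->
     (Q (A `&` B) = \int[Q]_(w in B) Qt w A)%E).

Definition cond_exp_version (Q : probability Omega R) (G : set (set Omega))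
    (X Y : Omega -> R) : Prop :=
  [/\ Q.-integrable setT (EFin \o X),
      G_measurable G Y,
      Q.-integrable setT (EFin \o Y) &
      forall B, G B -> (\int[Q]_(w in B) (Y w)%:E = \int[Q]_(w in B) (X w)%:E)%E].

End defs.

(* Main.v *)
Require Import Defs.
From HB Require Import structures.
From mathcomp Require Import all_boot all_order all_algebra.
From mathcomp Require Import all_classical all_reals all_analysis.
From mathcomp Require Import measurable_realfun.
From mathcomp Require Import lra.
Import Order.TTheory GRing.Theory Num.Theory numFieldNormedType.Exports.
Local Open Scope classical_set_scope.
Local Open Scope ring_scope.

Module Aux.
Set Implicit Arguments. Unset Strict Implicit. Unset Printing Implicit Defensive.
Section A.
Context {d : measure_display} {Omega : measurableType d} {R : realType}.
Variable G : set (set Omega).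
Hypothesis sG : sigma_algebra setT G.

Local Notation OT := (g_sigma_algebraType G).

Lemma measOT (A : set OT) : measurable A <-> G A.
Proof. by rewrite measurable_g_measurableTypeE. Qed.

Lemma GmP d' (Y : measurableType d') (f : Omega -> Y) :
  G_measurable G f <-> measurable_fun [set: OT] (f : OT -> Y).
Proof.
split=> [h _ B mB|h B mB]; first by rewrite setTI; apply/measOT; exact: h.
by have := h measurableT B mB; rewrite setTI => /measOT.
Qed.

Lemma jmP (f : R -> Omega -> R) : jointly_measurable G f <->
  measurable_fun [set: (R * OT)%type] (fun p : R * OT => f p.1 p.2).
Proof.
have E : (@measurable _ (R * OT)%type) = <<s rectangles G >>.
  rewrite measurable_prod_measurableType; congr (<<s _ >>).
  apply/funext => S; apply/propext; split.
    move=> [A mA [B mB <-]]; exists A, B; split => //; split => //; by move: mB; rewrite measurable_g_measurableTypeE.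
  by move=> [A [B [mA [GB ->]]]]; exists A => //; exists B => //; rewrite measurable_g_measurableTypeE.
split=> [h _ B mB|h B mB]; first by rewrite setTI E; exact: h.
by have := h measurableT B mB; rewrite setTI E.
Qed.

Lemma idOT (sub : G `<=` measurable) : measurable_fun [set: Omega] (fun w : Omega => (w : OT)).
Proof. by move=> _ B /measOT GB; rewrite setTI; exact: sub. Qed.

End A.

Section B.
Variables (R : realType) (pi : R) (h c : R -> R).
Hypotheses (pi0 : 0 <= pi) (h0 : forall x, 0 <= h x <= pi)
  (hmono : {homo h : x y / x <= y}) (hcont : continuous h)
  (cmono : {homo c : x y / x <= y}) (ccont : continuous c).

Definition phi g a := a - h (g - c a).

Lemma phi_lt g a b : a < b -> phi g a < phi g b.
Proof.
move=> ab; rewrite /phi; apply: ltr_leD => //.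
by rewrite lerN2; apply: hmono; rewrite lerD2l lerN2; apply: cmono; exact: ltW.
Qed.

Lemma phi_le g a b : (phi g a <= phi g b) = (a <= b).
Proof.
apply/idP/idP; last first.
  by rewrite le_eqVlt => /orP[/eqP->//|/(phi_lt g)/ltW].
by apply: contraTT; rewrite -!ltNge; exact: phi_lt.
Qed.

Lemma phi_cont g : continuous (phi g).
Proof.
move=> a; apply: cvgB; first exact: cvg_id.
apply: continuous_comp; last exact: hcont.
by apply: cvgB; [exact: cvg_cst|exact: ccont].
Qed.

Lemma fix_ex g : exists a, phi g a = 0.
Proof.
have p0 : phi g 0 <= 0.
  by rewrite /phi sub0r oppr_le0; have /andP[] := h0 (g - c 0).
have p1 : 0 <= phi g pi.
  by rewrite /phi subr_ge0; have /andP[] := h0 (g - c pi).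
have cw : {within `[0, pi], continuous (phi g)}.
  by apply: continuous_subspaceT => y; exact: phi_cont.
have mm : Num.min (phi g 0) (phi g pi) <= 0 <= Num.max (phi g 0) (phi g pi).
  by rewrite ge_min le_max p0 p1 orbT.
have [a _ ha] := IVT pi0 cw mm.
by exists a.
Qed.

Definition fp g := xget 0 [set a | phi g a = 0].

Lemma fpP g : phi g (fp g) = 0.
Proof. exact: (xgetPex 0 (fix_ex g)). Qed.

Lemma fp_uniq g a : phi g a = 0 -> a = fp g.
Proof. by move=> ha; apply/eqP; rewrite eq_le -(phi_le g a) -(phi_le g (fp g)) ha fpP lexx. Qed.

Lemma fp_le g r : (fp g <= r) = (0 <= phi g r).
Proof. by rewrite -(phi_le g (fp g) r) fpP. Qed.

Lemma fp_eq g : fp g = h (g - c (fp g)).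
Proof. by apply/eqP; rewrite -subr_eq0; apply/eqP; exact: fpP. Qed.

Lemma fp_range g : 0 <= fp g <= pi.
Proof. by rewrite fp_eq. Qed.

Lemma fp_mono : {homo fp : x y / x <= y}.
Proof.
move=> g1 g2 g12; rewrite -(phi_le g2 (fp g1)) fpP /phi subr_le0 [X in X <= _]fp_eq.
by apply: hmono; rewrite lerD2r.
Qed.

Lemma phi_contg b : continuous (fun g => phi g b).
Proof.
move=> g; apply: cvgB; first exact: cvg_cst.
apply: continuous_comp; last exact: hcont.
by apply: cvgB; [exact: cvg_id|exact: cvg_cst].
Qed.

Lemma phi_ltE g a b : (phi g a < phi g b) = (a < b).
Proof. by rewrite !ltNge phi_le. Qed.

Lemma fp_cont : continuous fp.
Proof.
move=> g0; apply/cvgrPdist_lt => e e0.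
have up : \forall g \near g0, 0 < phi g (fp g0 + e).
  have H : 0 < phi g0 (fp g0 + e) by rewrite -(fpP g0) phi_ltE ltrDl.
  exact: (@cvgr_gt _ _ _ _ (fun g => phi g (fp g0 + e)) _ (@phi_contg _ g0) 0 H).
have lo : \forall g \near g0, phi g (fp g0 - e) < 0.
  have H : phi g0 (fp g0 - e) < 0 by rewrite -(fpP g0) phi_ltE ltrBlDr ltrDl.
  exact: (@cvgr_lt _ _ _ _ (fun g => phi g (fp g0 - e)) _ (@phi_contg _ g0) 0 H).
near=> g.
have u : 0 < phi g (fp g0 + e) by near: g.
have l : phi g (fp g0 - e) < 0 by near: g.
move: u l; rewrite -(fpP g) !phi_ltE => u l.
rewrite ltr_norml; apply/andP; split.
  lra.
lra.
Unshelve. all: by end_near.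
Qed.

End B.

Section PF.
Local Open Scope ereal_scope.
Context d d' (T1 : measurableType d) (T2 : measurableType d') (R : realType).
Variables (m : {measure set T1 -> \bar R}) (f : T1 -> T2).
Hypothesis mf : measurable_fun [set: T1] f.
Definition pf (_ : measurable_fun [set: T1] f) : set T2 -> \bar R := pushforward m f.
Let pf0 : pf mf set0 = 0.
Proof. by rewrite /pf /pushforward preimage_set0 measure0. Qed.
Let pf_ge0 A : 0 <= pf mf A.
Proof. exact: measure_ge0. Qed.
Let pf_sigma_additive : semi_sigma_additive (pf mf).
Proof.
move=> F mF tF mUF; rewrite /pf /pushforward preimage_bigcup.
apply: measure_semi_sigma_additive.
- by move=> n; rewrite -[X in measurable X]setTI; exact: mf.
- apply/trivIsetP => /= i j _ _ ij; rewrite -preimage_setI.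
  by move/trivIsetP : tF => /(_ _ _ _ _ ij) ->//; rewrite preimage_set0.
- by rewrite -preimage_bigcup -[X in measurable X]setTI; exact: mf.
Qed.
HB.instance Definition _ := isMeasure.Build _ _ _
  (pf mf) pf0 pf_ge0 pf_sigma_additive.

Lemma ge0_integral_pf (g : T2 -> \bar R) D : measurable D ->
  measurable_fun D g -> (forall y, D y -> 0 <= g y) ->
  \int[pf mf]_(y in D) g y = \int[m]_(x in f @^-1` D) g (f x).
Proof.
move=> mD mg g0; rewrite /pf ge0_integral_pushforward//.
by move=> y /[!inE]; exact: g0.
Qed.
End PF.


Unset Implicit Arguments.
Lemma jmP' d (Omega : measurableType d) (R : realType) (f : R -> Omega -> R) :
  jointly_measurable measurable f <->
  measurable_fun [set: (R * Omega)%type] (fun p : R * Omega => f p.1 p.2).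
Proof.
have E : (@measurable _ (R * Omega)%type) = <<s rectangles measurable >>.
  rewrite measurable_prod_measurableType; congr (<<s _ >>).
  apply/funext => S; apply/propext; split.
    by move=> [A mA [B mB <-]]; exists A, B.
  by move=> [A [B [mA [GB ->]]]]; exists A => //; exists B.
split=> [h _ B mB|h B mB]; first by rewrite setTI E; exact: h.
by have := h measurableT B mB; rewrite setTI E.
Qed.

Section Main.
Context {d : measure_display} {Omega : measurableType d} {R : realType}.
Variables (Q : probability Omega R) (G : set (set Omega))
  (Qt : Omega -> probability Omega R) (pi : R) (c alpha1 : R -> Omega -> R)
  (eps : Omega -> R).
Hypotheses (sG : sigma_algebra setT G) (subG : G `<=` measurable)
  (hQt : regular_cond_distr Q G Qt) (pi0 : 0 < pi)
  (hc : jointly_measurable G c)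
  (cmono : forall w, {homo (fun a => c a w) : x y / x <= y})
  (ccont : forall w, continuous (fun a : R => c a w))
  (ha1 : jointly_measurable measurable alpha1)
  (a1r : forall g w, 0 <= alpha1 g w <= pi)
  (a1mono : forall w, {homo (fun g => alpha1 g w) : x y / x <= y})
  (meps : measurable_fun setT eps)
  (hcont : forall w, continuous
     (fun x : R => fine (\int[Qt w]_(w' in setT) (alpha1 (x + eps w') w')%:E))).
Local Notation OT := (g_sigma_algebraType G).

Let mc : measurable_fun [set: (R * OT)%type] (fun p : R * OT => c p.1 p.2).
Proof. exact/(jmP sG). Qed.
Let ma1 : measurable_fun [set: (R * Omega)%type] (fun p : R * Omega => alpha1 p.1 p.2).
Proof. exact/jmP'. Qed.

Section DisintPart.
Local Open Scope ereal_scope.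
Lemma Qt_fin w A : measurable A -> Qt w A \is a fin_num.
Proof.
move=> mA; rewrite ge0_fin_numE ?measure_ge0//.
exact: (le_lt_trans (probability_le1 _ mA) (ltey _)).
Qed.

Lemma mQt U : measurable U -> measurable_fun [set: OT] (fun w => Qt w U).
Proof.
move=> mU; have := proj1 hQt U mU => /(GmP sG) mf.
have -> : (fun w => Qt w U) = EFin \o (fun w => fine (Qt w U)).
  by apply/funext => w /=; rewrite fineK// (Qt_fin w U mU).
exact/measurable_EFinP.
Qed.

Definition kQ (w : OT) : {measure set Omega -> \bar R} := Qt w.
HB.instance Definition _ := isKernel.Build _ _ OT Omega R kQ mQt.
Let kQ1 w : kQ w [set: Omega] = 1. Proof. exact: probability_setT. Qed.
HB.instance Definition _ := Kernel_isProbability.Build _ _ _ _ _ kQ kQ1.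

Definition kS (p : R * OT) : {measure set Omega -> \bar R} := Qt p.2.
Let mkS U : measurable U -> measurable_fun [set: R * OT] (kS ^~ U).
Proof. by move=> mU; exact: (measurableT_comp (mQt _ mU) measurable_snd). Qed.
HB.instance Definition _ := isKernel.Build _ _ _ Omega R kS mkS.
Let kS1 p : kS p [set: Omega] = 1. Proof. exact: probability_setT. Qed.
HB.instance Definition _ := Kernel_isProbability.Build _ _ _ _ _ kS kS1.

Definition idOTm := idOT sG subG.
Definition QT : {measure set OT -> \bar R} := pf Q idOTm.
Definition lc (_ : OT) : {measure set OT -> \bar R} := QT.
Let mlc U : measurable U -> measurable_fun [set: OT] (lc ^~ U).
Proof. by move=> mU; exact: measurable_cst. Qed.
HB.instance Definition _ := isKernel.Build _ _ _ _ R lc mlc.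
Let lc1 x : lc x [set: OT] = 1.
Proof. by rewrite /lc /QT /= /pf /pushforward preimage_setT probability_setT. Qed.
HB.instance Definition _ := Kernel_isProbability.Build _ _ _ _ _ lc lc1.

Definition kk (p : OT * OT) : {measure set (OT * Omega) -> \bar R} :=
  pf (Qt p.2) (@pair1_measurable _ _ OT Omega p.2).
Let mkk U : measurable U -> measurable_fun [set: OT * OT] (kk ^~ U).
Proof.
move=> mU.
have := @measurable_fun_xsection_finite_kernel _ _ OT Omega R kQ U.
rewrite inE => /(_ mU) h.
have -> : (kk ^~ U) = (fun w => kQ w (xsection U w)) \o snd.
  apply/funext => p /=; rewrite /kk /= /pf /pushforward /kQ; congr (Qt _ _).
  by apply/seteqP; split => y /=; rewrite /xsection /= inE.
exact: (measurableT_comp h measurable_snd).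
Qed.
HB.instance Definition _ := isKernel.Build _ _ _ _ R kk mkk.
Let kk1 p : kk p [set: OT * Omega] = 1.
Proof. by rewrite /kk /= /pf /pushforward preimage_setT probability_setT. Qed.
HB.instance Definition _ := Kernel_isProbability.Build _ _ _ _ _ kk kk1.

Definition diag (w : Omega) : OT * Omega := (w, w).
Lemma mdiag : measurable_fun [set: Omega] diag.
Proof. by apply/measurable_fun_pairP; split; [exact: idOTm|exact: measurable_id]. Qed.
Definition m2 : {measure set (OT * Omega) -> \bar R} := pf Q mdiag.
Definition m1 : {measure set (OT * Omega) -> \bar R} := (lc \; kk) point.

Lemma m1X C A : measurable C -> measurable A -> m1 (C `*` A) = Q (A `&` C).
Proof.
move=> mC mA.
rewrite /m1 /= /kcomp.
transitivity (\int[QT]_y (((fun w => Qt w A) \_ C) y)).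
  apply: eq_integral => y _; rewrite /kk /= /pf /pushforward /patch.
  case: ifPn => yC.
    by congr (Qt _ _); apply/seteqP; split => z /=; [case|split=> //; exact: set_mem].
  rewrite (_ : _ @^-1` _ = set0) ?measure0//.
  by apply/seteqP; split => z //= -[/mem_set yC' _]; move: yC; rewrite yC'.
rewrite -integral_mkcond ge0_integral_pf//.
- by rewrite (proj2 hQt) //; exact/measOT.
- exact: measurable_funS (mQt _ mA).
Qed.

Lemma m2X C A : m2 (C `*` A) = Q (A `&` C).
Proof. by rewrite /m2 /= /pf /pushforward setIC. Qed.

Lemma m12 A : measurable A -> m1 A = m2 A.
Proof.
set Cs := [set C `*` A | C in (@measurable _ OT) & A in (@measurable _ Omega)].
have CI : setI_closed Cs.
  move=> _ _ [X1 mX1 [X2 mX2 <-]] [Y1 mY1 [Y2 mY2 <-]].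
  exists (X1 `&` Y1); first exact: measurableI.
  by exists (X2 `&` Y2); [exact: measurableI|rewrite setXI].
have CT : Cs setT by exists setT => //; exists setT => //; rewrite setXTT.
apply: (@measure_unique _ _ _ Cs (fun _ => setT)) => //.
- exact: measurable_prod_measurableType.
- by rewrite bigcup_const.
- by move=> _ [C mC [B mB <-]]; rewrite m1X// m2X.
- move=> _; rewrite -setXTT m1X// setIT probability_setT; exact: ltey.
Qed.

Lemma disint (f : OT * Omega -> \bar R) : (forall z, 0 <= f z) ->
  measurable_fun [set: OT * Omega] f ->
  \int[QT]_w \int[Qt w]_w' f (w, w') = \int[Q]_w f (w, w).
Proof.
move=> f0 mf.
transitivity (\int[lc point]_y \int[kk (point, y)]_z f z).
  apply: eq_integral => y _; rewrite /kk ge0_integral_pf// preimage_setT.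
rewrite -integral_kcomp//.
transitivity (\int[m2]_z f z).
  by apply: eq_measure_integral => A mA _; exact: m12.
by rewrite /m2 ge0_integral_pf// preimage_setT.
Qed.

End DisintPart.

Definition H x w := fine (\int[Qt w]_(w' in setT) (alpha1 (x + eps w') w')%:E).

Lemma ma1x x : measurable_fun [set: Omega] (fun w' => alpha1 (x + eps w') w').
Proof.
apply: (measurableT_comp ma1 (f := fun p : R * Omega => alpha1 p.1 p.2)
  (g := fun w' => (x + eps w', w'))).
apply/measurable_fun_pairP; split => /=.
  by apply: measurable_funD => //; exact: measurable_cst.
exact: measurable_id.
Qed.

Lemma Hint x w : (\int[Qt w]_(w' in setT) (alpha1 (x + eps w') w')%:E = (H x w)%:E)%E
  /\ 0 <= H x w <= pi.
Proof.
have mf : measurable_fun [set: Omega] (fun w' => (alpha1 (x + eps w') w')%:E).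
  exact/measurable_EFinP/ma1x.
have i0 : (0 <= \int[Qt w]_(w' in setT) (alpha1 (x + eps w') w')%:E)%E.
  by apply: integral_ge0 => w' _; rewrite lee_fin; case/andP: (a1r (x + eps w') w').
have ipi : (\int[Qt w]_(w' in setT) (alpha1 (x + eps w') w')%:E <= pi%:E)%E.
  apply: (@le_trans _ _ (\int[Qt w]_(w' in setT) (cst pi%:E) w')%E).
    apply: ge0_le_integral => //; try (by move=> w' _; rewrite lee_fin ltW);
      by move=> w' _; rewrite lee_fin; case/andP: (a1r (x + eps w') w').
  rewrite integral_cst//.
  rewrite -[leRHS]mule1; apply: lee_wpmul2l; first by rewrite lee_fin ltW.
  exact: probability_le1.
have fin : (\int[Qt w]_(w' in setT) (alpha1 (x + eps w') w')%:E \is a fin_num)%E.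
  by rewrite ge0_fin_numE// (le_lt_trans ipi) ?ltey.
split; first by rewrite /H fineK.
by rewrite /H; apply/andP; split; rewrite -lee_fin fineK.
Qed.

Lemma Hmono w : {homo (fun x => H x w) : x y / x <= y}.
Proof.
move=> x y xy; have [Ix _] := Hint x w; have [Iy _] := Hint y w.
rewrite -lee_fin -Ix -Iy; apply: ge0_le_integral => //;
  try exact/measurable_EFinP/ma1x; move=> w' _; rewrite lee_fin.
all: first [ by case/andP: (a1r (x + eps w') w') | by case/andP: (a1r (y + eps w') w')
  | by apply: a1mono; rewrite lerD2r ].
Qed.

Lemma Hcont w : continuous (fun x => H x w).
Proof. exact: hcont. Qed.

Lemma Hr x w : 0 <= H x w <= pi.
Proof. by have [] := Hint x w. Qed.

Lemma mH : measurable_fun [set: (R * OT)%type] (fun p : R * OT => H p.1 p.2).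
Proof.
pose k := fun z : (R * OT) * Omega => (alpha1 (z.1.1 + eps z.2) z.2)%:E.
have k0 z : (0 <= k z)%E by rewrite lee_fin; case/andP: (a1r (z.1.1 + eps z.2) z.2).
have mk : measurable_fun [set: (R * OT) * Omega] k.
  apply/measurable_EFinP.
  apply: (measurableT_comp ma1 (f := fun p : R * Omega => alpha1 p.1 p.2)
    (g := fun z : (R * OT) * Omega => (z.1.1 + eps z.2, z.2))).
  apply/measurable_fun_pairP; split => /=.
    apply: measurable_funD.
      exact: (measurableT_comp measurable_fst measurable_fst).
    exact: (measurableT_comp meps measurable_snd).
  exact: measurable_snd.
have := measurable_fun_integral_finite_kernel k kS k0 mk.
have -> : (fun x => \int[kS x]_y k (x, y))%E = EFin \o (fun p : R * OT => H p.1 p.2).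
  by apply/funext => p /=; rewrite -(proj1 (Hint p.1 p.2)).
by move/measurable_EFinP.
Qed.

Let pi0' : 0 <= pi := ltW pi0.
Let h0 w : forall x, 0 <= H x w <= pi := fun x => Hr x w.

Definition alpha g w := fp (fun x => H x w) (fun a => c a w) g.

Lemma alpha_eq g w : alpha g w = H (g - c (alpha g w) w) w.
Proof. exact: (fp_eq pi0' (h0 w) (Hcont w) (ccont w)). Qed.

Lemma alpha_r g w : 0 <= alpha g w <= pi.
Proof. exact: (fp_range pi0' (h0 w) (Hcont w) (ccont w)). Qed.

Lemma alpha_mono w : {homo (fun g => alpha g w) : x y / x <= y}.
Proof. exact: (fp_mono pi0' (h0 w) (Hmono w) (Hcont w) (cmono w) (ccont w)). Qed.

Lemma alpha_cont w : continuous (fun g => alpha g w).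
Proof. exact: (fp_cont pi0' (h0 w) (Hmono w) (Hcont w) (cmono w) (ccont w)). Qed.

Lemma alpha_uniq g w a : a = H (g - c a w) w -> a = alpha g w.
Proof.
move=> ha; apply: (fp_uniq pi0' (h0 w) (Hmono w) (Hcont w) (cmono w) (ccont w)).
by rewrite /phi -ha subrr.
Qed.

Lemma alpha_ge x g w : (x <= alpha g w) = (x - H (g - c x w) w <= 0).
Proof.
rewrite -(phi_le (Hmono w) (cmono w) g x (alpha g w)).
by rewrite [X in _ <= X](fpP pi0' (h0 w) (Hcont w) (ccont w)).
Qed.

Lemma mc_comp d0 (X : measurableType d0) (u : X -> R) (v : X -> OT) :
  measurable_fun [set: X] u -> measurable_fun [set: X] v ->
  measurable_fun [set: X] (fun x => c (u x) (v x)).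
Proof.
move=> mu mv.
apply: (measurableT_comp mc (f := fun p : R * OT => c p.1 p.2)
  (g := fun x => (u x, v x))).
by apply/measurable_fun_pairP; split.
Qed.

Lemma mH_comp d0 (X : measurableType d0) (u : X -> R) (v : X -> OT) :
  measurable_fun [set: X] u -> measurable_fun [set: X] v ->
  measurable_fun [set: X] (fun x => H (u x) (v x)).
Proof.
move=> mu mv.
apply: (measurableT_comp mH (f := fun p : R * OT => H p.1 p.2)
  (g := fun x => (u x, v x))).
by apply/measurable_fun_pairP; split.
Qed.

Arguments mc_comp {d0 X u v}.
Arguments mH_comp {d0 X u v}.

Lemma malpha : measurable_fun [set: (R * OT)%type] (fun p : R * OT => alpha p.1 p.2).
Proof.
apply: (measurability _ (measurable_realfun.RGenCInfty.measurableE R)).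
move=> _ [_ [x ->] <-].
pose psi := fun p : R * OT => x - H (p.1 - c x p.2) p.2.
have mpsi : measurable_fun [set: R * OT] psi.
  apply: measurable_funB; first exact: measurable_cst.
  apply: mH_comp; last exact: measurable_snd.
  apply: measurable_funB; first exact: measurable_fst.
  by apply: mc_comp; [exact: measurable_cst|exact: measurable_snd].
have -> : [set: R * OT] `&` (fun p : R * OT => alpha p.1 p.2) @^-1` `[x, +oo[%classic
    = [set: R * OT] `&` psi @^-1` `]-oo, 0]%classic.
  apply/seteqP; split => p /= [_ hp]; split => //; move: hp => /=;
    by rewrite !in_itv /= ?andbT alpha_ge.
exact: mpsi.
Qed.

Lemma indic_int (F : Omega -> R) (B : set Omega) :
  (\int[Q]_w ((\1_B w * F w)%:E) = \int[Q]_(w in B) (F w)%:E)%E.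
Proof.
rewrite [RHS]integral_mkcond; apply: eq_integral => w _.
by rewrite /patch indicE; case: (w \in B); rewrite ?mul1r ?mul0r.
Qed.

Lemma mOmega_comp (b : Omega -> R) : G_measurable G b ->
  measurable_fun [set: Omega] b.
Proof.
move=> /(GmP sG) mb.
exact: (measurableT_comp mb (idOT sG subG)).
Qed.

Lemma condH (b : Omega -> R) (g : R) : G_measurable G b -> forall B, G B ->
  (\int[Q]_(w in B) (H (g - c (b w) w) w)%:E =
   \int[Q]_(w in B) (alpha1 (g - c (b w) w + eps w) w)%:E)%E.
Proof.
move=> /(GmP sG) mb B GB.
have mB : measurable (B : set OT) by exact/(measOT sG).
pose y := fun w : OT => g - c (b w) w.
have my : measurable_fun [set: OT] y.
  apply: measurable_funB; first exact: measurable_cst.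
  by apply: (@mc_comp _ OT b (fun w => w) mb); exact: measurable_id.
pose f := fun z : OT * Omega => ((\1_B z.1) * alpha1 (y z.1 + eps z.2) z.2)%:E.
have f0 z : (0 <= f z)%E.
  rewrite lee_fin mulr_ge0//; last by case/andP: (a1r (y z.1 + eps z.2) z.2).
have mf : measurable_fun [set: OT * Omega] f.
  apply/measurable_EFinP; apply: measurable_funM.
    have mi : measurable_fun [set: OT] (\1_B : OT -> R) by exact: measurable_indic.
    exact: (measurableT_comp mi measurable_fst).
  apply: (measurableT_comp ma1 (f := fun p : R * Omega => alpha1 p.1 p.2)
    (g := fun z : OT * Omega => (y z.1 + eps z.2, z.2))).
  apply/measurable_fun_pairP; split => /=.
    apply: measurable_funD.
      exact: (measurableT_comp my measurable_fst).
    exact: (measurableT_comp meps measurable_snd).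
  exact: measurable_snd.
have E1 : (\int[QT]_w \int[Qt w]_w' f (w, w') =
    \int[QT]_w ((\1_B w * H (y w) w)%:E))%E.
  apply: eq_integral => w _ /=.
  rewrite /f /=; under eq_integral do rewrite EFinM.
  rewrite ge0_integralZl//.
  - by rewrite (proj1 (Hint (y w) w)) EFinM.
  - by apply/measurable_EFinP; apply: (ma1x (y w)).
  - by move=> w' _; rewrite lee_fin; case/andP: (a1r (y w + eps w') w').
have := disint f f0 mf.
rewrite E1 -indic_int -indic_int => <-.
rewrite /QT ge0_integral_pf//.
- by rewrite preimage_setT indic_int.
- apply/measurable_EFinP; apply: measurable_funM.
    exact: measurable_indic.
  by apply: mH_comp => //; exact: measurable_id.
- by move=> w _; rewrite lee_fin mulr_ge0//; case/andP: (Hr (y w) w).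
Qed.

Lemma int_bounded (f : Omega -> R) : measurable_fun [set: Omega] f ->
  (forall w, 0 <= f w <= pi) -> Q.-integrable [set: Omega] (EFin \o f).
Proof.
move=> mf hf; apply: measurable_bounded_integrable => //.
  exact: (le_lt_trans (probability_le1 Q measurableT) (ltey _)).
rewrite /bounded_near; near=> M => w _ /=.
have /andP[f0 fpi] := hf w.
rewrite ger0_norm// (le_trans fpi)//.
Unshelve. all: by end_near.
Qed.

Lemma ae_int (b1 b2 : Omega -> R) : G_measurable G b1 -> G_measurable G b2 ->
  (forall w, 0 <= b1 w <= pi) -> (forall w, 0 <= b2 w <= pi) ->
  (forall B, G B -> (\int[Q]_(w in B) (b1 w)%:E = \int[Q]_(w in B) (b2 w)%:E)%E) ->
  {ae Q, forall w, b1 w = b2 w}.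
Proof.
move=> /(GmP sG) m1 /(GmP sG) m2 r1 r2 hB.
have QTint (b : Omega -> R) (E : set OT) : measurable E -> measurable_fun [set: OT] b ->
    (forall w, 0 <= b w) ->
    (\int[QT]_(w in E) (b w)%:E = \int[Q]_(w in E) (b w)%:E)%E.
  move=> mE mb b0; rewrite /QT ge0_integral_pf//.
  - apply/measurable_EFinP; exact: measurable_funS mb.
  - by move=> w _; rewrite lee_fin.
have i1 : QT.-integrable [set: OT] (EFin \o b1).
  apply: measurable_bounded_integrable => //.
    rewrite /QT /= /pf /pushforward preimage_setT.
    exact: (le_lt_trans (probability_le1 Q measurableT) (ltey _)).
  rewrite /bounded_near; near=> M => w _ /=.
  have /andP[f0 fpi] := r1 w.
  rewrite ger0_norm// (le_trans fpi)//.

have hE : forall E : set OT, E `<=` setT -> measurable E ->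
    (\int[QT]_(x in E) (EFin \o b1) x = \int[QT]_(x in E) (EFin \o b2) x)%E.
  move=> E _ mE /=; rewrite !QTint//.
  - exact: (hB E (proj1 (measOT sG E) mE)).
  - by move=> w; case/andP: (r2 w).
  - by move=> w; case/andP: (r1 w).
have := @integral_ae_eq _ _ _ QT setT measurableT (EFin \o b2) (EFin \o b1) i1
  (proj2 (measurable_EFinP _ _) m2) hE.
case=> N [mN N0 sub]; exists N; split => //.
- by apply: subG; exact/(measOT sG).
- move=> w /= nw; apply: sub => /= h; apply: nw.
  by have := h I => -[].
Unshelve. all: by end_near.
Qed.

Definition PP (a : R -> Omega -> R) :=
  [/\ jointly_measurable G a,
      (forall g w, 0 <= a g w <= pi) &
      forall g, cond_exp_version Q G
        (fun w => alpha1 (g - c (a g w) w + eps w) w) (a g)].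

Lemma mX (b : Omega -> R) g : G_measurable G b ->
  measurable_fun [set: Omega] (fun w => alpha1 (g - c (b w) w + eps w) w).
Proof.
move=> gb.
apply: (measurableT_comp ma1 (f := fun p : R * Omega => alpha1 p.1 p.2)
  (g := fun w => (g - c (b w) w + eps w, w))).
apply/measurable_fun_pairP; split => /=; last exact: measurable_id.
apply: measurable_funD => //; apply: measurable_funB; first exact: measurable_cst.
exact: (mc_comp (mOmega_comp _ gb) (idOT sG subG)).
Qed.

Lemma main_res : exists a : R -> Omega -> R,
  [/\ PP a,
      (forall beta, PP beta -> forall g, {ae Q, forall w, beta g w = a g w}) &
      (forall w, {homo (fun g => a g w) : x y / x <= y} /\ continuous (fun g : R => a g w))].
Proof.
exists alpha; split.
- split.
  + apply/(jmP sG); exact: malpha.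
  + exact: alpha_r.
  + move=> g.
    have ga : G_measurable G (alpha g).
      apply/(GmP sG).
      exact: (measurableT_comp malpha (f := fun p : R * OT => alpha p.1 p.2)
        (g := pair g) (pair1_measurable g)).
    split => //.
    * apply: int_bounded; first exact: mX.
      by move=> w; exact: a1r.
    * apply: int_bounded; first exact: (mOmega_comp _ ga).
      by move=> w; exact: alpha_r.
    * move=> B GB; rewrite -(condH (alpha g) g ga B GB).
      by apply: eq_integral => w _; rewrite -alpha_eq.
- move=> beta [jb rb cb] g.
  have [iX gb ib eqB] := cb g.
  have mHb : G_measurable G (fun w => H (g - c (beta g w) w) w).
    apply/(GmP sG); apply: mH_comp; last exact: measurable_id.
    apply: measurable_funB; first exact: measurable_cst.
    apply: mc_comp; last exact: measurable_id.
    exact/(GmP sG).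
  have := ae_int _ _ gb mHb (rb g) (fun w => Hr _ w).
  have h : forall B, G B -> (\int[Q]_(w in B) (beta g w)%:E =
      \int[Q]_(w in B) (H (g - c (beta g w) w) w)%:E)%E.
    by move=> B GB; rewrite (eqB B GB) (condH (beta g) g gb B GB).
  move=> /(_ h); apply: filterS => w.
  exact: alpha_uniq.
- by move=> w; split; [exact: alpha_mono|exact: alpha_cont].
Qed.

End Main.

End Aux.

Theorem lemma2 (d : measure_display) (Omega : measurableType d) (R : realType)
  (Q : probability Omega R) (F : nat -> set (set Omega)) (Tn t : nat)
  (pi : R) (c : R -> Omega -> R) (alpha1 : R -> Omega -> R)
  (Qt : Omega -> probability Omega R) (eps : Omega -> R) :
  is_filtration F Tn -> (t < Tn)%N -> 0 < pi ->
  jointly_measurable (F t) c ->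
  (forall w, {homo (fun a => c a w) : x y / x <= y}) ->
  (forall w, continuous (fun a : R => c a w)) ->
  jointly_measurable measurable alpha1 ->
  (forall g w, 0 <= alpha1 g w <= pi) ->
  (forall w, {homo (fun g => alpha1 g w) : x y / x <= y}) ->
  regular_cond_distr Q (F t) Qt ->
  measurable_fun setT eps ->
  (forall w, continuous
     (fun x : R => fine (\int[Qt w]_(w' in setT) (alpha1 (x + eps w') w')%:E))) ->
  let P (alpha : R -> Omega -> R) :=
    [/\ jointly_measurable (F t) alpha,
        (forall g w, 0 <= alpha g w <= pi) &
        forall g, cond_exp_version Q (F t)
          (fun w => alpha1 (g - c (alpha g w) w + eps w) w) (alpha g)] in
  exists alpha : R -> Omega -> R,
    [/\ P alpha,
        (forall beta, P beta -> forall g, {ae Q, forall w, beta g w = alpha g w}) &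
        (forall w, {homo (fun g => alpha g w) : x y / x <= y} /\
                   continuous (fun g : R => alpha g w))].
Proof.
move=> hF tTn pi0 hc cmono ccont ha1 a1r a1mono hQt meps hcont P.
have [sG subG] := proj1 hF t (ltnW tTn).
have [a [Pa ua hm]] := Aux.main_res Q (F t) Qt pi c alpha1 eps sG subG hQt pi0 hc
  cmono ccont ha1 a1r a1mono meps hcont.
by exists a; split.
Qed.
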